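(* Let $\gamma$ be an even probability density on $\mathbb{R}$ positive near $0$ and $\mathcal{P}=\mathcal{P}^n_\gamma$ the corresponding sub-spherical family on $\mathbb{R}^n$, let $\delta\ge0$, and let $\eta$ be a $\delta$-regular potential. Then $\mathrm{risk}_\delta(\eta|\mathcal{P}^n_\gamma)\le\epsilon_\delta(\eta|\gamma)$, where $\epsilon_\delta(\eta|\gamma)=\int_{-\infty}^{\infty}e^{-\eta(\delta+s)}\gamma(s)\,ds$.
   Context: The sub-spherical family $\mathcal{P}^n_\gamma$ consists of all even probability densities $p$ on $\mathbb{R}^n$ such that $\int_{\{e^T\xi\ge t\}}p(\xi)d\xi\le\int_t^\infty\gamma(s)ds$ for all unit $e\in\mathbb{R}^n$ and $t\ge0$. A potential is an odd, nondecreasing Borel function $\eta:\mathbb{R}\to\mathbb{R}$; it is $\delta$-regular if $H_{\delta\eta}(s)=e^{-\eta(\delta-s)}+e^{-\eta(\delta+s)}$ is nondecreasing on $s\ge0$. For a family $\mathcal{P}$ of densities on $\mathbb{R}^n$, $\mathrm{risk}_\delta(\eta|\mathcal{P})$ is the smallest $\epsilon$ such that for all unit $e$ and all $p\in\mathcal{P}$: $\int e^{-\eta(\delta+e^T\xi)}p(\xi)d\xi\le\epsilon$ and $\int e^{\eta(e^T\xi-\delta)}p(\xi)d\xi\le\epsilon$. *)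

(* Defs.v *)
From HB Require Import structures.
From mathcomp Require Import all_boot all_order all_algebra.
From mathcomp Require Import all_classical all_reals all_analysis.
Set Implicit Arguments. Unset Strict Implicit. Unset Printing Implicit Defensive.
Import Order.TTheory GRing.Theory Num.Theory.
Local Open Scope classical_set_scope.
Local Open Scope ring_scope.

(* Points of R^n are n-tuples of reals (with the product Borel sigma-algebra
   provided by mathcomp-analysis on tuples). *)

(* Lebesgue integral on R^n of a NONNEGATIVE function, written as the
   iterated Lebesgue integral over the coordinates (equal to the integral
   against n-dimensional Lebesgue measure by Tonelli); only applied below to
   nonnegative measurable integrands. *)
Fixpoint iint (R : realType) (n : nat) : (n.-tuple R -> \bar R) -> \bar R :=
  match n return (n.-tuple R -> \bar R) -> \bar R with
  | 0 => fun f => f [tuple]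
  | m.+1 => fun f =>
      (\int[@lebesgue_measure R]_x iint (fun t : m.-tuple R => f (cons_tuple x t)))%E
  end.

Definition dotv (R : realType) (n : nat) (e x : n.-tuple R) : R :=
  \sum_(i < n) tnth e i * tnth x i.

Definition unitv (R : realType) (n : nat) (e : n.-tuple R) : Prop :=
  dotv e e = 1.

Definition even_density1 (R : realType) (g : R -> R) : Prop :=
  measurable_fun setT g /\ (forall s, 0 <= g s) /\
  (\int[@lebesgue_measure R]_s (g s)%:E = 1)%E /\ (forall s, g (- s) = g s).

Definition pos_near0 (R : realType) (g : R -> R) : Prop :=
  exists r : R, 0 < r /\ forall s, `|s| < r -> 0 < g s.

Definition even_density (R : realType) (n : nat) (p : n.-tuple R -> R) : Prop :=
  measurable_fun setT p /\ (forall x, 0 <= p x) /\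
  iint (fun x => (p x)%:E) = 1%E /\
  (forall x, p (map_tuple (fun y => - y) x) = p x).

Definition subspherical (R : realType) (n : nat) (g : R -> R)
    (p : n.-tuple R -> R) : Prop :=
  even_density p /\
  forall e : n.-tuple R, unitv e -> forall t : R, 0 <= t ->
    (iint (fun x => ((\1_[set y | t <= dotv e y] x) * p x)%:E)
     <= \int[@lebesgue_measure R]_(s in `[t, +oo[%classic) (g s)%:E)%E.

Definition potential (R : realType) (eta : R -> R) : Prop :=
  (forall s, eta (- s) = - eta s) /\
  (forall s1 s2, s1 <= s2 -> eta s1 <= eta s2) /\
  measurable_fun setT eta.

Definition Hfun (R : realType) (delta : R) (eta : R -> R) (s : R) : R :=
  expR (- eta (delta - s)) + expR (- eta (delta + s)).

Definition regular (R : realType) (delta : R) (eta : R -> R) : Prop :=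
  forall s1 s2, 0 <= s1 -> s1 <= s2 -> Hfun delta eta s1 <= Hfun delta eta s2.

(* risk_delta(eta | P): the smallest epsilon bounding both integrals for all
   unit e and p in P, i.e. the supremum of all these integrals. *)
Definition risk (R : realType) (n : nat) (delta : R) (eta : R -> R)
    (P : (n.-tuple R -> R) -> Prop) : \bar R :=
  ereal_sup [set v | exists (e : n.-tuple R) (p : n.-tuple R -> R),
    unitv e /\ P p /\
    (v = iint (fun x => (expR (- eta (delta + dotv e x)) * p x)%:E) \/
     v = iint (fun x => (expR (eta (dotv e x - delta)) * p x)%:E))].

Definition eps (R : realType) (delta : R) (eta : R -> R) (g : R -> R) : \bar R :=
  (\int[@lebesgue_measure R]_s (expR (- eta (delta + s)) * g s)%:E)%E.

(* Main.v *)
Require Import Defs.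
From HB Require Import structures.
From mathcomp Require Import all_boot all_order all_algebra.
From mathcomp Require Import all_classical all_reals all_analysis.
From mathcomp Require Import measurable_realfun.
Set Implicit Arguments. Unset Strict Implicit. Unset Printing Implicit Defensive.
Import Order.TTheory GRing.Theory Num.Theory.
Local Open Scope classical_set_scope.
Local Open Scope ring_scope.

Section iint_theory.
Context {R : realType}.
Local Notation mu := (@lebesgue_measure R).
Local Open Scope ereal_scope.

Lemma iint_ge0 (n : nat) (f : n.-tuple R -> \bar R) :
  (forall x, 0 <= f x) -> 0 <= iint f.
Proof.
elim: n f => [|m IH] f f0 /=; first exact: f0.
by apply: integral_ge0 => x _; apply: IH.
Qed.

Lemma iint_meas (n : nat) d (T : measurableType d)
    (f : T * n.-tuple R -> \bar R) :
  measurable_fun [set: T * n.-tuple R] f -> (forall z, 0 <= f z) ->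
  measurable_fun setT (fun x => iint (fun t => f (x, t))).
Proof.
elim: n d T f => [|m IH] d T f mf f0 /=.
  apply: (measurableT_comp (f := f) (g := fun x => (x, [tuple]))) => //.

pose g := fun z : (T * R) * m.-tuple R => f (z.1.1, cons_tuple z.1.2 z.2).
have mg : measurable_fun setT g.
  apply: measurableT_comp => //.
  apply: measurable_fun_pair.
    by apply: measurableT_comp => //.
  apply: measurable_cons.
    by apply: measurableT_comp => //.
  by [].
have := IH _ _ g mg (fun z => f0 _).
move=> mG.
exact: (@measurable_fun_fubini_tonelli_F _ _ _ _ _ mu _ mG (fun z => iint_ge0 (fun t => f0 _))).
Qed.


Lemma iint_meas1 (m : nat) (f : m.+1.-tuple R -> \bar R) :
  measurable_fun [set: m.+1.-tuple R] f -> (forall z, 0 <= f z) ->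
  measurable_fun [set: R] (fun x => iint (fun t => f (cons_tuple x t))).
Proof.
move=> mf f0.
pose g := fun z : R * m.-tuple R => f (cons_tuple z.1 z.2).
have mg : measurable_fun [set: R * m.-tuple R] g.
  apply: measurableT_comp => //.
  by apply: measurable_cons.
exact: (iint_meas mg (fun z => f0 _)).
Qed.

Lemma iint_le (n : nat) (f g : n.-tuple R -> \bar R) :
  measurable_fun [set: n.-tuple R] f -> measurable_fun [set: n.-tuple R] g ->
  (forall x, 0 <= f x) -> (forall x, f x <= g x) -> iint f <= iint g.
Proof.
elim: n f g => [|m IH] f g mf mg f0 fg /=; first exact: fg.
have g0 : forall x, 0 <= g x by move=> x; apply: le_trans (f0 x) (fg x).
apply: ge0_le_integral => //.
- by move=> x _; apply: iint_ge0 => t; apply: f0.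
- exact: iint_meas1.
- exact: iint_meas1.
move=> x _; apply: IH.
- by apply: measurableT_comp => //; apply: measurable_cons.
- by apply: measurableT_comp => //; apply: measurable_cons.
- by move=> t; apply: f0.
- by move=> t; apply: fg.
Qed.

Lemma iint_add (n : nat) (f g : n.-tuple R -> \bar R) :
  measurable_fun [set: n.-tuple R] f -> measurable_fun [set: n.-tuple R] g ->
  (forall x, 0 <= f x) -> (forall x, 0 <= g x) ->
  iint (fun x => f x + g x) = iint f + iint g.
Proof.
elim: n f g => [|m IH] f g mf mg f0 g0 //=.
rewrite -ge0_integralD //.
- apply: eq_integral => x _; apply: IH => //.
  + by apply: measurableT_comp => //; apply: measurable_cons.
  + by apply: measurableT_comp => //; apply: measurable_cons.
- by move=> x _; apply: iint_ge0.
- exact: iint_meas1.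
- by move=> x _; apply: iint_ge0.
- exact: iint_meas1.
Qed.

Lemma iint0 (n : nat) : iint (fun _ : n.-tuple R => 0) = 0.
Proof.
elim: n => [|m IH] //=.
under eq_integral do rewrite IH.
exact: integral0.
Qed.

Lemma integralN_ge0 (g : R -> \bar R) :
  measurable_fun [set: R] g -> (forall x, 0 <= g x) ->
  \int[mu]_x g (- x)%R = \int[mu]_x g x.
Proof.
move=> mg g0.
have := @ge0_integral_pushforward _ _ (measurableTypeR R) (measurableTypeR R) R (-%R) (@oppr_measurable _ _) mu setT g
  measurableT mg (fun y _ => g0 y).
rewrite preimage_setT => <-.
apply: eq_measure_integral => A mA _.
exact: lebesgue_measureN.
Qed.


Lemma iint_tonelli (n : nat) (F : n.-tuple R * R -> \bar R) :
  measurable_fun [set: n.-tuple R * R] F -> (forall z, 0 <= F z) ->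
  iint (fun x => \int[mu]_u F (x, u)) = \int[mu]_u iint (fun x => F (x, u)).
Proof.
elim: n F => [|m IH] F mF F0 //=.
transitivity (\int[mu]_y \int[mu]_u iint (fun t => F (cons_tuple y t, u))).
  apply: eq_integral => y _.
  apply: (IH (fun z => F (cons_tuple y z.1, z.2))).
    apply: measurableT_comp => //.
    apply: measurable_fun_pair => //.
    by apply: measurable_cons.
  by move=> z; apply: F0.
pose G := fun z : R * R => iint (fun t => F (cons_tuple z.1 t, z.2)).
have mG : measurable_fun [set: R * R] G.
  pose g := fun z : (R * R) * m.-tuple R => F (cons_tuple z.1.1 z.2, z.1.2).
  have mg : measurable_fun [set: (R * R) * m.-tuple R] g.
    apply: measurableT_comp => //.
    apply: measurable_fun_pair.
      apply: measurable_cons => //.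
      by apply: measurableT_comp => //.
    by apply: measurableT_comp => //.
  exact: (iint_meas mg (fun z => F0 _)).
exact: (@fubini_tonelli _ _ _ _ _ mu mu G mG (fun z => iint_ge0 (fun t => F0 _))).
Qed.

Definition negt (n : nat) (x : n.-tuple R) : n.-tuple R := map_tuple (fun y => - y)%R x.

Lemma negt_cons (m : nat) (y : R) (t : m.-tuple R) :
  negt (cons_tuple y t) = cons_tuple (- y)%R (negt t).
Proof. by apply: val_inj. Qed.

Lemma measurable_negt (n : nat) : measurable_fun [set: n.-tuple R] (@negt n).
Proof.
apply/measurable_fun_tnthP => i.
rewrite /negt /comp.
have -> : (fun x : n.-tuple R => tnth (map_tuple (fun y => - y)%R x) i) =
  (fun x => - tnth x i)%R.
  by apply/funext => x; rewrite tnth_map.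
apply: measurableT_comp => //.
exact: measurable_tnth.
Qed.

Lemma iint_neg (n : nat) (f : n.-tuple R -> \bar R) :
  measurable_fun [set: n.-tuple R] f -> (forall z, 0 <= f z) ->
  iint (fun x => f (negt x)) = iint f.
Proof.
elim: n f => [|m IH] f mf f0 /=.
  by congr f; apply: val_inj.
transitivity (\int[mu]_y iint (fun t => f (cons_tuple (- y)%R t))).
  apply: eq_integral => y _.
  rewrite -(IH (fun t => f (cons_tuple (- y)%R t))).
  - by congr iint; apply/funext => t; rewrite negt_cons.
  - apply: measurableT_comp => //.
    by apply: measurable_cons.
  - by move=> t; apply: f0.
apply: (integralN_ge0 (g := fun y => iint (fun t => f (cons_tuple y t)))).
  exact: iint_meas1.
by move=> y; apply: iint_ge0.
Qed.

End iint_theory.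

Section main.
Context {R : realType}.
Local Notation mu := (@lebesgue_measure R).

Lemma measurable_dotv n (e : n.-tuple R) : measurable_fun [set: n.-tuple R] (dotv e).
Proof.
rewrite /dotv; apply: measurable_sum => i.
apply: measurable_funM => //.
exact: measurable_tnth.
Qed.

Lemma dotv_negr n (e x : n.-tuple R) : dotv e (negt x) = - dotv e x.
Proof.
rewrite /dotv -sumrN; apply: eq_bigr => i _.
by rewrite /negt tnth_map mulrN.
Qed.

Lemma dotv_negl n (e x : n.-tuple R) : dotv (negt e) x = - dotv e x.
Proof.
rewrite /dotv -sumrN; apply: eq_bigr => i _.
by rewrite /negt tnth_map mulNr.
Qed.

Lemma unitv_negt n (e : n.-tuple R) : unitv e -> unitv (negt e).
Proof. by rewrite /unitv dotv_negl dotv_negr opprK. Qed.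

Definition lc (y u : R) : R :=
  \1_(`[0%R, +oo[%classic : set R) u * \1_(`]0%R, +oo[%classic : set R) (y - u).

Lemma lcE y u : lc y u = ((0 <= u) && (u < y))%:R.
Proof.
rewrite /lc !indicE.
rewrite !mem_setE !in_itv /= !andbT subr_gt0.
by case: (0 <= u); case: (u < y); rewrite ?mulr1 ?mulr0 ?mul0r.
Qed.

Lemma lc_ge0 y u : 0 <= lc y u.
Proof. by rewrite lcE ler0n. Qed.

Lemma measurable_lc d (T : measurableType d) (k q : T -> R) :
  measurable_fun [set: T] k -> measurable_fun [set: T] q ->
  measurable_fun [set: T * R] (fun z => (lc (k z.1) z.2 * q z.1)%:E).
Proof.
move=> mk mq; apply/measurable_EFinP; apply: measurable_funM.
  have mi (A : set R) : measurable A -> measurable_fun [set: R] (\1_A : R -> R).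
    by move=> mA; exact: measurable_indic.
  apply: measurable_funM.
    exact: (measurableT_comp (mi _ (measurable_itv _)) measurable_snd).
  apply: (measurableT_comp (mi _ (measurable_itv _))).
  apply: measurable_funB => //.
  exact: measurableT_comp.
exact: measurableT_comp.
Qed.

Lemma measurable_lc1 (y : R) : measurable_fun [set: R] (lc y).
Proof.
have mi (A : set R) : measurable A -> measurable_fun [set: R] (\1_A : R -> R).
  by move=> mA; exact: measurable_indic.
apply: measurable_funM; first exact: (mi _ (measurable_itv _)).
apply: (measurableT_comp (mi _ (measurable_itv _))).
exact: measurable_funB.
Qed.

Local Open Scope ereal_scope.

Lemma int_lc (y c : R) : (0 <= y)%R -> (0 <= c)%R ->
  \int[mu]_u (lc y u * c)%:E = (y * c)%:E.
Proof.
move=> y0 c0.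
under eq_integral do rewrite EFinM.
rewrite (@ge0_integralZr _ _ _ mu setT measurableT (fun u => (lc y u)%:E)); last 3 first.
- by apply/measurable_EFinP; exact: measurable_lc1.
- by move=> u _; rewrite lee_fin lc_ge0.
- by rewrite lee_fin.
have -> : (fun u => (lc y u)%:E) = (fun u => (\1_(`[0%R, y[%classic : set R) u)%:E).
  apply/funext => u; rewrite lcE indicE mem_setE in_itv /=.
  done.
rewrite integral_indic // setIT.
transitivity (lebesgue_measure (`[0%R, y[%classic : set R) * c%:E); first by [].
rewrite lebesgue_measure_itv /=.
rewrite lte_fin; case: ltP => [y0'|].
  by rewrite sube0.
by move=> yle; have -> : y = 0%R by apply/le_anti; rewrite yle y0.
Qed.


Lemma mindic (A : set R) : measurable A -> measurable_fun [set: R] (\1_A : R -> R).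
Proof. by move=> mA; exact: measurable_indic. Qed.

Lemma indic_mem (T : Type) (A : set T) x : A x -> (\1_A x : R) = 1%R.
Proof. by move=> Ax; rewrite indicE mem_set. Qed.

Lemma indic_ge0' (T : Type) (A : set T) x : (0 <= (\1_A x : R))%R.
Proof. by rewrite indicE ler0n. Qed.

Lemma measurable_lcu d (T : measurableType d) (k q : T -> R) (u : R) :
  measurable_fun [set: T] k -> measurable_fun [set: T] q ->
  measurable_fun [set: T] (fun x => (lc (k x) u * q x)%:E).
Proof.
move=> mk mq.
have h1 := measurable_lc mk mq.
have h2 : measurable_fun [set: T] (fun x => (x, u)).
  exact: measurable_fun_pair.
have := measurableT_comp h1 h2.
exact.
Qed.

Lemma measurable_indic_dotv n (e : n.-tuple R) (a : R) :
  measurable_fun [set: n.-tuple R] (fun x => (\1_[set y | (a <= dotv e y)%R] x : R)).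
Proof.
apply: measurable_indic.
have -> : [set y | (a <= dotv e y)%R] = dotv e @^-1` (`[a, +oo[%classic : set R).
  by apply/seteqP; split => y /=; rewrite in_itv /= andbT.
have := measurable_dotv e measurableT (measurable_itv `[a, +oo[).
by rewrite setTI.
Qed.

Lemma claimD n (gamma H : R -> R) (e : n.-tuple R) (p : n.-tuple R -> R) (u : R) :
  measurable_fun [set: R] gamma -> (forall s, 0 <= gamma s)%R ->
  (forall s, gamma (- s) = gamma s)%R ->
  measurable_fun [set: R] H -> (forall s, H (- s) = H s)%R ->
  (forall s1 s2, 0 <= s1 -> s1 <= s2 -> H s1 <= H s2)%R ->
  unitv e -> subspherical gamma p ->
  iint (fun x => (lc (H (dotv e x)) u * p x)%:E) <= \int[mu]_s (lc (H s) u * gamma s)%:E.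
Proof.
move=> mg g0 geven mH Heven Hmono eu [[mp [p0 _]] tail].
have HA : forall s, H s = H `|s|%R.
  move=> s; have [s0|s0] := leP 0%R s; first by rewrite ger0_norm.
  by rewrite ltr0_norm // Heven.
have mX := measurable_dotv e.
have mHX : measurable_fun [set: n.-tuple R] (fun x => H (dotv e x)) by exact: measurableT_comp.
have rhs0 : 0 <= \int[mu]_s (lc (H s) u * gamma s)%:E.
  by apply: integral_ge0 => s _; rewrite lee_fin mulr_ge0 // lc_ge0.
case: (ltP u 0%R) => [u0 | u0].
  have -> : (fun x => (lc (H (dotv e x)) u * p x)%:E) = (fun _ => 0).
    by apply/funext => x; rewrite lcE leNgt u0 /= mul0r.
  by rewrite iint0.
case: (pselect (exists s, (u < H s)%R)) => [[s0 hs0] | nE]; last first.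
  have -> : (fun x => (lc (H (dotv e x)) u * p x)%:E) = (fun _ => 0).
    apply/funext => x; rewrite lcE u0 /=.
    case: ltP => h; last by rewrite mul0r.
    by exfalso; apply: nE; exists (dotv e x).
  by rewrite iint0.
pose E := [set r : R | exists s, (u < H s)%R /\ r = `|s|%R].
have E0 : E !=set0 by exists `|s0|%R, s0.
have Elb : has_lbound E by exists 0%R => r [s [_ ->]].
pose a := inf E.
have a0 : (0 <= a)%R by apply: lb_le_inf => // r [s [_ ->]].
have hi : forall s, (u < H s)%R -> (a <= `|s|%R)%R.
  by move=> s hs; apply: (ge_inf Elb); exists s.
have hii : forall s, (a < `|s|%R)%R -> (u < H s)%R.
  move=> s als; have [r [s' [hs' ->]] rs] := inf_lt E0 als.
  rewrite HA; apply: (lt_le_trans hs'); rewrite (HA s'); apply: Hmono => //.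
  exact: ltW.
pose A1 := fun x => (\1_[set y | (a <= dotv e y)%R] x * p x)%R.
pose A2 := fun x => (\1_[set y | (a <= dotv (negt e) y)%R] x * p x)%R.
have mA1 : measurable_fun [set: n.-tuple R] A1.
  by apply: measurable_funM => //; exact: measurable_indic_dotv.
have mA2 : measurable_fun [set: n.-tuple R] A2.
  by apply: measurable_funM => //; exact: measurable_indic_dotv.
have A10 : forall x, (0 <= A1 x)%R by move=> x; rewrite mulr_ge0 // indic_ge0'.
have A20 : forall x, (0 <= A2 x)%R by move=> x; rewrite mulr_ge0 // indic_ge0'.
apply: (@le_trans _ _ (iint (fun x => (A1 x + A2 x)%:E))).
  apply: iint_le.
  - exact: measurable_lcu.
  - by apply/measurable_EFinP; exact: measurable_funD.
  - by move=> x; rewrite lee_fin mulr_ge0 // lc_ge0.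
  move=> x; rewrite lee_fin lcE u0 /=.
  case: ltP => h; last by rewrite mul0r addr_ge0.
  rewrite mul1r.
  have := hi _ h.
  have [X0|X0] := leP 0%R (dotv e x).
    rewrite ger0_norm // => aX.
    by rewrite /A1 indic_mem // mul1r lerDl.
  rewrite ltr0_norm // => aX.
  rewrite /A2 indic_mem ?mul1r ?lerDr //.
  by rewrite /= dotv_negl.
have -> : (fun x => (A1 x + A2 x)%:E) = (fun x => (A1 x)%:E + (A2 x)%:E) by [].
rewrite iint_add; [|by apply/measurable_EFinP|by apply/measurable_EFinP
  |by move=> x; rewrite lee_fin|by move=> x; rewrite lee_fin].
apply: (@le_trans _ _ (\int[mu]_(s in `[a, +oo[) (gamma s)%:E + \int[mu]_(s in `[a, +oo[) (gamma s)%:E)).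
  apply: leeD.
    exact: tail.
  exact: tail (unitv_negt eu) _ a0.
pose I1 := fun s : R => (\1_(`]a, +oo[%classic : set R) s * gamma s)%R.
have mI1 : measurable_fun [set: R] I1.
  by apply: measurable_funM => //.
have I10 : forall s, (0 <= I1 s)%R by move=> s; rewrite mulr_ge0 // indic_ge0'.
have Gam : \int[mu]_(s in `[a, +oo[) (gamma s)%:E = \int[mu]_s (I1 s)%:E.
  rewrite -(@integral_itv_obnd_cbnd R a (BInfty R false) (fun s => (gamma s)%:E)); last first.
    by apply/measurable_EFinP; exact: measurable_funTS.
  rewrite integral_mkcond; apply: eq_integral => s _.
  rewrite patchE /I1 indicE.
  by case: (s \in _); rewrite ?mul1r ?mul0r.
have Gam2 : \int[mu]_s (I1 s)%:E = \int[mu]_s (I1 (- s)%R)%:E.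
  rewrite (integralN_ge0 (g := fun s => (I1 s)%:E)) //.
  by apply/measurable_EFinP.
apply: (@le_trans _ _ (\int[mu]_s (I1 s)%:E + \int[mu]_s (I1 (- s)%R)%:E)%E).
  rewrite -Gam2 -Gam; exact: lexx.
rewrite -ge0_integralD //; last 4 first.
- by move=> s _; rewrite lee_fin.
- by apply/measurable_EFinP.
- by move=> s _; rewrite lee_fin.
- apply/measurable_EFinP.
  exact: (measurableT_comp mI1 (@oppr_measurable _ _)).
apply: ge0_le_integral => //.
- by move=> s _; rewrite adde_ge0 // lee_fin.
- apply: emeasurable_funD; apply/measurable_EFinP => //.
  exact: (measurableT_comp mI1 (@oppr_measurable _ _)).
- exact: measurable_lcu.
move=> s _; rewrite -EFinD lee_fin /I1 lcE u0 /= geven.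
rewrite !indicE !mem_setE !in_itv /= !andbT.
have [as_|as_] := ltP a s.
  have -> : (a < - s)%R = false.
    by apply/negbTE; rewrite -leNgt; apply: (le_trans _ a0); rewrite oppr_le0 ltW // (le_lt_trans a0).
  rewrite (hii s) ?mul1r ?mul0r ?addr0 //.
  by apply: (lt_le_trans as_); exact: ler_norm.
have [ans|ans] := ltP a (- s)%R.
  rewrite (hii s) ?mul1r ?mul0r ?add0r //.
  by apply: (lt_le_trans ans); rewrite -normrN; exact: ler_norm.
by rewrite !mul0r addr0 mulr_ge0 // lc_ge0.
Qed.


Lemma claimC n (gamma H : R -> R) (e : n.-tuple R) (p : n.-tuple R -> R) :
  measurable_fun [set: R] gamma -> (forall s, 0 <= gamma s)%R ->
  (forall s, gamma (- s) = gamma s)%R ->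
  measurable_fun [set: R] H -> (forall s, H (- s) = H s)%R ->
  (forall s1 s2, 0 <= s1 -> s1 <= s2 -> H s1 <= H s2)%R ->
  (forall s, 0 <= H s)%R ->
  unitv e -> subspherical gamma p ->
  iint (fun x => (H (dotv e x) * p x)%:E) <= \int[mu]_s (H s * gamma s)%:E.
Proof.
move=> mg g0 geven mH Heven Hmono H0 eu hp.
have [[mp [p0 _]] _] := hp.
have mX := measurable_dotv e.
have mHX : measurable_fun [set: n.-tuple R] (fun x => H (dotv e x)) by exact: measurableT_comp.
have -> : (fun x => (H (dotv e x) * p x)%:E) =
    (fun x => \int[mu]_u (lc (H (dotv e x)) u * p x)%:E).
  by apply/funext => x; rewrite int_lc.
rewrite (iint_tonelli (F := fun z => (lc (H (dotv e z.1)) z.2 * p z.1)%:E)); last 2 first.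
- exact: (measurable_lc mHX mp).
- by move=> z; rewrite lee_fin mulr_ge0 // lc_ge0.
have -> : (fun s => (H s * gamma s)%:E) =
    (fun s => \int[mu]_u (lc (H s) u * gamma s)%:E).
  by apply/funext => s; rewrite int_lc.
rewrite (fubini_tonelli (m1 := mu) (m2 := mu) (fun z : R * R => (lc (H z.1) z.2 * gamma z.1)%:E)); last 2 first.
- exact: (measurable_lc mH mg).
- by move=> z; rewrite lee_fin mulr_ge0 // lc_ge0.
apply: ge0_le_integral => //.
- move=> u _; apply: iint_ge0 => x /=.
  by rewrite -[0%R]/(0%:E) lee_fin mulr_ge0 // lc_ge0.
- pose f := fun z : R * n.-tuple R => (lc (H (dotv e z.2)) z.1 * p z.2)%:E.
  have mf : measurable_fun [set: R * n.-tuple R] f.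
    have h1 := measurable_lc mHX mp.
    have h2 : measurable_fun [set: R * n.-tuple R] (fun z : R * n.-tuple R => (z.2, z.1)).
      exact: measurable_fun_pair.
    exact: (measurableT_comp h1 h2).
  have f0 : forall z, 0 <= f z.
    by move=> z; rewrite /f lee_fin mulr_ge0 // lc_ge0.
  exact: (iint_meas mf f0).
- have g0' : forall z : R * R, 0 <= (lc (H z.1) z.2 * gamma z.1)%:E.
    by move=> z; rewrite lee_fin mulr_ge0 // lc_ge0.
  exact: (@measurable_fun_fubini_tonelli_G _ _ _ _ _ mu _ (measurable_lc mH mg) g0').
move=> u _; exact: claimD.
Qed.


Lemma addxx_le (x y : \bar R) : 0 <= x -> x + x <= y + y -> x <= y.
Proof.
case: x => [r| |] //; case: y => [t| |] //=.
- move=> _; rewrite -!EFinD !lee_fin => h.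
  by rewrite -(ler_pM2l (_ : (0 < 2)%R)) // !mulr2n !mulrDl !mul1r.
by move=> _ _; exact: leey.
Qed.

Lemma key n (gamma : R -> R) (delta : R) (eta : R -> R) (e : n.-tuple R)
    (p : n.-tuple R -> R) :
  even_density1 gamma -> potential eta -> regular delta eta -> unitv e ->
  subspherical gamma p ->
  iint (fun x => (expR (- eta (delta + dotv e x)) * p x)%R%:E) <= eps delta eta gamma.
Proof.
move=> [mg [g0 [_ geven]]] [etaodd [etamono meta]] hreg eu hp.
have [[mp [p0 [_ peven]]] _] := hp.
have pe : forall x, p (negt x) = p x := peven.
pose f := fun s : R => (expR (- eta (delta + s)))%R.
have mf : measurable_fun [set: R] f.
  apply: measurableT_comp => //.
  apply: measurableT_comp => //.
  apply: measurableT_comp meta _.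
  exact: measurable_funD.
have f0 : forall s, (0 <= f s)%R by move=> s; exact: expR_ge0.
pose H := Hfun delta eta.
have HE : forall s, H s = (f (- s) + f s)%R by move=> s.
have mH : measurable_fun [set: R] H.
  have -> : H = (fun s => f (- s) + f s)%R by apply/funext.
  apply: measurable_funD => //.
  exact: (measurableT_comp mf (@oppr_measurable _ _)).
have Heven : forall s, H (- s)%R = H s by move=> s; rewrite !HE opprK addrC.
have H0 : forall s, (0 <= H s)%R by move=> s; rewrite HE addr_ge0.
have mX := measurable_dotv e.
have mfXp : measurable_fun [set: n.-tuple R] (fun x => (f (dotv e x) * p x)%:E).
  apply/measurable_EFinP; apply: measurable_funM => //.
  exact: measurableT_comp.
have mfXp' : measurable_fun [set: n.-tuple R] (fun x => (f (- dotv e x) * p x)%R%:E).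
  apply/measurable_EFinP; apply: measurable_funM => //.
  apply: measurableT_comp mf _.
  exact: measurableT_comp.
set I := iint (fun x => (f (dotv e x) * p x)%:E).
have I2 : I = iint (fun x => (f (- dotv e x) * p x)%R%:E).
  rewrite /I -(iint_neg (f := fun x => (f (dotv e x) * p x)%:E)) //; last first.
    by move=> x; rewrite lee_fin mulr_ge0.
  by congr iint; apply/funext => x; rewrite dotv_negr pe.
have IH : I + I = iint (fun x => (H (dotv e x) * p x)%:E).
  rewrite {2}I2 /I -iint_add //; last 2 first.
  - by move=> x; rewrite lee_fin mulr_ge0.
  - by move=> x; rewrite lee_fin mulr_ge0.
  by congr iint; apply/funext => x; rewrite HE mulrDl EFinD addrC.
have mfg : measurable_fun [set: R] (fun s => (f s * gamma s)%R%:E).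
  by apply/measurable_EFinP; apply: measurable_funM.
have fg0 : forall s, 0 <= (f s * gamma s)%R%:E by move=> s; rewrite lee_fin mulr_ge0.
have eps2 : \int[mu]_s (H s * gamma s)%:E = eps delta eta gamma + eps delta eta gamma.
  rewrite /eps.
  have -> : (fun s => (H s * gamma s)%:E) =
      (fun s => (f (- s) * gamma s)%R%:E + (f s * gamma s)%R%:E).
    by apply/funext => s; rewrite HE mulrDl EFinD.
  have e1 : \int[mu]_x (f (- x) * gamma x)%R%:E = \int[mu]_x (f x * gamma x)%R%:E.
    transitivity (\int[mu]_x (f (- x) * gamma (- x))%R%:E).
      by apply: eq_integral => x _; rewrite geven.
    exact: (integralN_ge0 mfg fg0).
  rewrite ge0_integralD //.
  - by rewrite e1.
  - by move=> s _; rewrite lee_fin mulr_ge0.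
  - apply/measurable_EFinP; apply: measurable_funM => //.
    exact: (measurableT_comp mf (@oppr_measurable _ _)).
have := claimC mg g0 geven mH Heven hreg H0 eu hp.
rewrite -IH eps2.
apply: addxx_le.
by apply: iint_ge0 => x; rewrite lee_fin mulr_ge0.
Qed.

End main.

Unset Implicit Arguments. Set Strict Implicit.

Theorem proposition2p13 (R : realType) (n : nat) (gamma : R -> R)
    (delta : R) (eta : R -> R) :
  even_density1 gamma -> pos_near0 gamma ->
  0 <= delta -> potential eta -> regular delta eta ->
  (risk delta eta (@subspherical R n gamma) <= eps delta eta gamma)%E.
Proof.
move=> hg _ _ heta hreg.
rewrite /risk; apply: ge_ereal_sup => v [e [p [eu [hp [-> | ->]]]]].
  exact: key.
have [[mp [p0 [_ peven]]] _] := hp.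
have pe : forall x, p (negt x) = p x := peven.
have [etaodd [_ meta]] := heta.
have -> : (fun x => (expR (eta (dotv e x - delta)) * p x)%:E) =
   (fun x => (expR (- eta (delta + dotv e (negt x))) * p (negt x))%:E).
  apply/funext => x; rewrite dotv_negr pe.
  by rewrite -[in RHS](opprB (dotv e x) delta) etaodd opprK.
rewrite (iint_neg (f := fun x => (expR (- eta (delta + dotv e x)) * p x)%:E)).
- exact: key.
- apply/measurable_EFinP; apply: measurable_funM => //.
  apply: measurableT_comp => //.
  apply: measurableT_comp => //.
  apply: measurableT_comp meta _.
  apply: measurable_funD => //.
  exact: measurable_dotv.
- by move=> x; rewrite lee_fin mulr_ge0 // expR_ge0.
Qed.
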